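(* Let $G$ be a finite group, $\chi\in\operatorname{Irr}(G)$, and $\mathbb{E}:=\mathbb{Q}(\chi)$. Then for every subfield $\mathbb{F}$ of $\mathbb{E}$ (containing $\mathbb{Q}$) there exist a finite group $H$ and $\psi\in\operatorname{Irr}(H)$ such that $\mathbb{Q}(\psi)=\mathbb{F}$ and $\psi(1)=n\,\chi(1)^n$, where $n:=[\mathbb{E}:\mathbb{F}]$.
   Context: $\operatorname{Irr}(G)$ is the set of complex irreducible characters of $G$; $\mathbb{Q}(\chi)$ is the field generated over $\mathbb{Q}$ by the values of $\chi$ (an abelian extension of $\mathbb{Q}$). *)

(* Defs.v *)
From mathcomp Require Import all_boot all_order all_algebra all_fingroup all_solvable all_field all_character.
Set Implicit Arguments. Unset Strict Implicit. Unset Printing Implicit Defensive.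
Import GRing.Theory Num.Theory.
Local Open Scope ring_scope.

(* Subfields of algC, represented as (Prop-valued) predicates.  Every
   subfield of algC automatically contains Q (characteristic 0). *)
Definition subfieldC (F : algC -> Prop) : Prop :=
  [/\ F 1,
      (forall x y, F x -> F y -> F (x - y)) &
      (forall x y, F x -> F y -> F (x / y))].

Definition gen_fieldC (S : algC -> Prop) : algC -> Prop :=
  fun x => forall F, subfieldC F -> (forall y, S y -> F y) -> F x.

Definition Qchar (gT : finGroupType) (G : {group gT}) (chi : 'CF(G)) : algC -> Prop :=
  gen_fieldC (fun y => exists g : gT, y = chi g).

Definition field_degreeC (F E : algC -> Prop) (n : nat) : Prop :=
  exists b : 'I_n -> algC,
    [/\ (forall i, E (b i)),
        (forall x, E x -> exists c : 'I_n -> algC,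
            (forall i, F (c i)) /\ x = \sum_(i < n) c i * b i) &
        (forall c : 'I_n -> algC, (forall i, F (c i)) ->
            \sum_(i < n) c i * b i = 0 -> forall i, c i = 0)].

(* Main.v *)
Require Import Defs.
From mathcomp Require Import all_boot all_order all_algebra all_fingroup all_solvable all_field all_character.
From Stdlib Require Import Classical.
Import GRing.Theory Num.Theory.
Local Open Scope ring_scope.
Set Implicit Arguments. Unset Strict Implicit. Unset Printing Implicit Defensive.

Section SubfC.
Variable K : algC -> Prop.
Hypothesis hK : subfieldC K.

Lemma sf1 : K 1. Proof. by case: hK. Qed.
Lemma sfB x y : K x -> K y -> K (x - y). Proof. by case: hK => _ h _; apply: h. Qed.
Lemma sfdiv x y : K x -> K y -> K (x / y). Proof. by case: hK => _ _ h; apply: h. Qed.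
Lemma sf0 : K 0. Proof. by rewrite -(subrr 1); apply: sfB; apply: sf1. Qed.
Lemma sfN x : K x -> K (- x). Proof. by move=> h; rewrite -sub0r; apply: sfB=> //; apply: sf0. Qed.
Lemma sfD x y : K x -> K y -> K (x + y).
Proof. by move=> hx hy; rewrite -[y]opprK; apply: sfB=> //; apply: sfN. Qed.
Lemma sfV x : K x -> K (x^-1). Proof. by move=> h; rewrite -div1r; apply: sfdiv=> //; apply: sf1. Qed.
Lemma sfM x y : K x -> K y -> K (x * y).
Proof. by move=> hx hy; rewrite -[y]invrK; apply: sfdiv=> //; apply: sfV. Qed.
Lemma sfnat n : K n%:R.
Proof. elim: n => [|n IH]; first exact: sf0. by rewrite -addn1 natrD; apply: sfD=> //; apply: sf1. Qed.
Lemma sfint z : K z%:~R.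
Proof. by case: z => n; rewrite ?NegzE ?mulrNz; [apply: sfnat | apply: sfN; apply: sfnat]. Qed.
Lemma sfrat q : K (ratr q).
Proof. by rewrite /ratr; apply: sfdiv; apply: sfint. Qed.
Lemma sfsum (I : Type) (r : seq I) (P : pred I) (f : I -> algC) :
  (forall i, P i -> K (f i)) -> K (\sum_(i <- r | P i) f i).
Proof.
move=> h; elim/big_rec: _ => [|i x Pi Kx]; first exact: sf0.
by apply: sfD=> //; apply: h.
Qed.
Lemma sfprod (I : Type) (r : seq I) (P : pred I) (f : I -> algC) :
  (forall i, P i -> K (f i)) -> K (\prod_(i <- r | P i) f i).
Proof.
move=> h; elim/big_rec: _ => [|i x Pi Kx]; first exact: sf1.
by apply: sfM=> //; apply: h.
Qed.
End SubfC.

Lemma gen_sub S : subfieldC (gen_fieldC S).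
Proof.
split.
- by move=> K hK _; apply: sf1.
- by move=> x y hx hy K hK hS; apply: sfB=> //; [apply: hx | apply: hy].
- by move=> x y hx hy K hK hS; apply: sfdiv=> //; [apply: hx | apply: hy].
Qed.

Lemma gen_S S y : S y -> gen_fieldC S y.
Proof. by move=> Sy K _ hS; apply: hS. Qed.

Lemma gen_min S K x : subfieldC K -> (forall y, S y -> K y) -> gen_fieldC S x -> K x.
Proof. by move=> hK hS; apply. Qed.

Section PredVspace.
Variables (F : fieldType) (vT : vectType F).
Variable P : vT -> Prop.
Hypotheses (P0 : P 0) (PD : forall x y, P x -> P y -> P (x + y))
  (PZ : forall a x, P x -> P (a *: x)).

Lemma pred_vspace : exists V : {vspace vT}, forall x, x \in V <-> P x.
Proof.
have main k : exists V : {vspace vT}, (forall x, x \in V -> P x) /\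
    ((k <= \dim V)%N \/ forall x, P x -> x \in V).
  elim: k => [|k [V [hV [hk | hall]]]].
  - exists 0%VS; split; last by left.
    by move=> x; rewrite memv0 => /eqP->.
  - case: (classic (forall x, P x -> x \in V)) => [hall|]; first by exists V; split=> //; right.
    move=> /not_all_ex_not[x hx]; have [Px xV] := imply_to_and _ _ hx.
    exists (V + <[x]>)%VS; split.
      move=> y /memv_addP[v vV [w /vlineP[a ->] ->]].
      by apply: PD; [apply: hV | apply: PZ].
    left; apply: (leq_ltn_trans hk).
    rewrite (ltn_leqif (dimv_leqif_eq (addvSl V <[x]>))).
    apply: contra_notN xV => /eqP ->; apply: (subvP (addvSr V _)); exact: memv_line.
  - by exists V; split=> //; right.
have [V [hV [hk|hall]]] := main (\dim (fullv : {vspace vT})).+1.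
  by have := dimvS (subvf V); rewrite leqNgt hk.
by exists V => x; split; [apply: hV | apply: hall].
Qed.
End PredVspace.

Section PredSubfield.
Variable L : fieldExtType rat.
Variable P : L -> Prop.
Hypotheses (P0 : P 0) (PD : forall x y, P x -> P y -> P (x + y))
  (PZ : forall a x, P x -> P (a *: x)) (P1 : P 1) (PM : forall x y, P x -> P y -> P (x * y)).

Lemma pred_subfield : exists K : {subfield L}, forall x, x \in K <-> P x.
Proof.
have [V hV] := pred_vspace P0 PD PZ.
have asp : is_aspace V.
  rewrite /is_aspace has_algid1 ?(proj2 (hV 1)) //=.
  by apply/prodvP => u v /hV Pu /hV Pv; apply/hV; apply: PM.
by exists (ASpace asp).
Qed.
End PredSubfield.


Lemma dim_ext (Qn : fieldExtType rat) (QnC : {rmorphism Qn -> algC})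
    (E F : algC -> Prop) (Ep Fp : {subfield Qn}) n :
  (forall x, x \in Ep <-> E (QnC x)) -> (forall x, x \in Fp <-> F (QnC x)) ->
  subfieldC F -> (forall y, E y -> exists x, y = QnC x) -> (forall x, F x -> E x) ->
  field_degreeC F E n -> \dim Ep = (n * \dim Fp)%N.
Proof.
move=> hE hF hFs im FE [b [bE bspan bind]].
have /fin_all_exists[b' Db'] : forall i, exists x, b i = QnC x.
  by move=> i; apply: im.
have b'E i : b' i \in Ep by apply/hE; rewrite -Db'.
have b'nz i : b' i != 0.
  apply/eqP => bz.
  have hc : forall j, F ((j == i)%:R) by move=> j; apply: (sfnat hFs).
  have hs : \sum_(j < n) (j == i)%:R * b j = 0.
    rewrite (bigD1 i) //= big1 => [|j ji]; last by rewrite (negPf ji) mul0r.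
    by rewrite eqxx mul1r addr0 Db' bz rmorph0.
  by have /eqP := bind _ hc hs i; rewrite eqxx oner_eq0.
have FpE : (Fp <= Ep)%VS.
  by apply/subvP => x /hF /FE /hE.
have defE : Ep = (\sum_i (Fp * <[b' i]>))%VS :> {vspace Qn}.
  apply/eqP; rewrite eqEsubv; apply/andP; split.
    apply/subvP => x /hE /bspan [c [cF Dx]].
    have /fin_all_exists[c' Dc'] : forall i, exists x, c i = QnC x.
      by move=> i; apply: im; apply: FE.
    have -> : x = \sum_i c' i * b' i.
      apply: (fmorph_inj QnC); rewrite Dx rmorph_sum; apply: eq_bigr => i _.
      by rewrite rmorphM -Dc' -Db'.
    apply: memv_sumr => i _; apply: memv_mul; last exact: memv_line.
    by apply/hF; rewrite -Dc'.
  apply/subv_sumP => i _; apply: prodv_sub => //.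
  by rewrite -memvE.
have dx : directv (\sum_i (Fp * <[b' i]>)).
  apply/directv_sum_independent => us hus sum0 i _.
  have /fin_all_exists[c' Dc'] : forall i, exists c, c \in Fp /\ us i = c * b' i.
    move=> j; have /memv_cosetP[c cF ->] := hus j isT.
    by exists c.
  have := bind (fun j => QnC (c' j)).
  have hc : forall j, F (QnC (c' j)) by move=> j; apply/hF; case: (Dc' j).
  move=> /(_ hc).
  have : \sum_i QnC (c' i) * b i = 0.
    transitivity (QnC (\sum_i us i)); last by rewrite sum0 rmorph0.
    rewrite rmorph_sum; apply: eq_bigr => j _.
    by case: (Dc' j) => _ ->; rewrite rmorphM Db'.
  move=> h /(_ h i) /eqP; rewrite fmorph_eq0 => /eqP c0.
  by case: (Dc' i) => _ ->; rewrite c0 mul0r.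
rewrite defE; move/directvP: dx => /= ->.
rewrite (eq_bigr (fun _ => \dim Fp)) => [|i _]; last by rewrite dim_cosetv_unit // unitfE.
by rewrite sum_nat_const card_ord.
Qed.


Section Wreath.
Variables (gT : finGroupType) (G : {group gT}) (I : finGroupType).
Local Notation fT := {dffun forall i : I, (fun _ => gT) i}.

Definition wB : {group fT} := setXn_group (fun _ : I => G).

Lemma in_wB (f : fT) : (f \in wB) = [forall i, f i \in G].
Proof. by rewrite inE. Qed.

Definition wshift (f : fT) (t : I) : fT := [ffun i => f (i * t^-1)%g].

Lemma wshift_in f t : f \in wB -> wshift f t \in wB.
Proof. by rewrite !in_wB => /forallP h; apply/forallP => i; rewrite ffunE. Qed.

Definition wto (f : fT) (t : I) : fT := if f \in wB then wshift f t else f.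

Lemma wto1 : wto^~ 1%g =1 id.
Proof.
move=> f; rewrite /wto; case: ifP => // _.
by apply/ffunP => i; rewrite ffunE invg1 mulg1.
Qed.

Lemma wtoM f : act_morph wto f.
Proof.
move=> a b; rewrite /wto; case: ifP => [fB|/negbT fB]; last by rewrite (negPf fB).
rewrite wshift_in //; apply/ffunP => i; rewrite !ffunE.
by rewrite invMg mulgA.
Qed.

Definition wact := TotalAction wto1 wtoM.

Lemma wact_gact : is_groupAction wB wact.
Proof.
move=> t _; rewrite inE; apply/andP; split.
  apply/subsetP => f; rewrite inE /= actpermE /= /wto.
  by apply: contraR => /negPf ->; rewrite eqxx.
apply/morphicP => f g fB gB; rewrite !actpermE /= /wto fB gB groupM //.
by apply/ffunP => i; rewrite !ffunE.
Qed.

Definition wgact := GroupAction wact_gact.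
Local Notation sdT := (sdprod_by wgact).

Definition wH : {group sdT} := [set: sdT]%G.
Definition wK : {group sdT} := (sdpair1 wgact @* wB)%G.
Definition wTop : {group sdT} := (sdpair2 wgact @* [set: I])%G.

Lemma wdefH : (wK ><| wTop = wH)%g.
Proof. exact: sdprod_sdpair. Qed.

Lemma wsdpair_act f t : f \in wB -> sdpair1 wgact (wshift f t) = (sdpair1 wgact f ^ sdpair2 wgact t)%g.
Proof.
move=> fB; have <- := @sdpair_act _ _ _ _ wgact f t fB (in_setT t).
by rewrite /= /wto fB.
Qed.


Definition wiso_m (i : I) : {morphism G >-> fT} :=
  [morphism of restrm (subsetT G) (@dfung1 I (fun _ => gT) i)].

Lemma wiso i : isom G (@set1gXn I (fun _ => gT) i G) (wiso_m i).
Proof.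
apply/isomP; split; first by rewrite injm_restrm ?injm_dfung1.
by rewrite morphim_restrm morphim_dfung1 setIid.
Qed.

Lemma wiso_mE i g : wiso_m i g = @dfung1 I (fun _ => gT) i g.
Proof. by []. Qed.

Definition wT (phi : I -> 'CF(G)) : 'CF(wB) :=
  cfBigdprod (setXn_dprod (fun _ : I => G)) (fun i => cfIsom (wiso i) (phi i)).

Lemma wB_prod (f : fT) : f = (\prod_(i : I) @dfung1 I (fun _ => gT) i (f i))%g.
Proof.
apply/ffunP => i; rewrite prodg_ffun (big_only1 i) ?dfung1_id //.
by move=> j ij _; rewrite dfung1_dflt.
Qed.

Lemma wTE phi f : f \in wB -> wT phi f = \prod_i phi i (f i).
Proof.
move=> fB; have fG i : f i \in G by move: fB; rewrite in_wB => /forallP.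
have -> : wT phi f = wT phi (\prod_(i : I) @dfung1 I (fun _ => gT) i (f i))%g by rewrite -wB_prod.
rewrite /wT cfBigdprodE.
  by apply: eq_bigr => i _; rewrite -wiso_mE cfIsomE.
by move=> i _; apply/set1gXnP; exists (f i).
Qed.
Lemma wT_irr phi : (forall i, phi i \in irr G) -> wT phi \in irr wB.
Proof. by move=> h; apply: cfBigdprod_irr => i _; rewrite cfIsom_irr. Qed.

Lemma wT1 phi : wT phi 1%g = \prod_i phi i 1%g.
Proof. by rewrite wTE ?group1 //; apply: eq_bigr => i _; rewrite oneg_ffun. Qed.

Lemma dfung1_wB i g : g \in G -> @dfung1 I (fun _ => gT) i g \in wB.
Proof.
move=> gG; rewrite in_wB; apply/forallP => j; have [<-|ij] := eqVneq i j.
  by rewrite dfung1_id.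
by rewrite dfung1_dflt.
Qed.

Lemma wT_inj (phi phi' : I -> 'CF(G)) (d : algC) : d != 0 ->
  (forall i, phi i 1%g = d) -> (forall i, phi' i 1%g = d) ->
  wT phi = wT phi' -> forall i, phi i = phi' i.
Proof.
move=> dnz h1 h1' eqT i; apply/cfunP => g.
have [gG|gG] := boolP (g \in G); last by rewrite !cfun0.
have := congr1 (fun th : 'CF(wB) => th (@dfung1 I (fun _ => gT) i g)) eqT.
move=> /=.
have E (ph : I -> 'CF(G)) : (forall j, ph j 1%g = d) ->
    \prod_j ph j (@dfung1 I (fun _ => gT) i g j) = ph i g * d ^+ #|[pred j | j != i]|.
  move=> hd; rewrite (bigD1 i) //= dfung1_id -prodr_const.
  congr (_ * _); apply: eq_bigr => j ij.
  by rewrite dfung1_dflt 1?eq_sym.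
rewrite !wTE ?dfung1_wB // !E //.
by apply: mulIf; rewrite expf_neq0.
Qed.

Lemma wisoK : isom wB wK (sdpair1_morphism wgact).
Proof. by apply/isomP; split; [apply: injm_sdpair1 | ]. Qed.

Definition wpsi (phi : I -> 'CF(G)) : 'CF(wH) := 'Ind[wH] (cfIsom wisoK (wT phi)).

Lemma wshift_prod (phi : I -> 'CF(G)) f t :
  \prod_i phi i (wshift f t i) = \prod_j phi (j * t)%g (f j).
Proof.
rewrite (reindex_inj (mulIg t)); apply: eq_bigr => j _.
by rewrite ffunE mulgK.
Qed.

Lemma wpsiE phi f : f \in wB ->
  wpsi phi (sdpair1 wgact f) = \sum_(t : I) \prod_j phi (j * t)%g (f j).
Proof.
move=> fB; rewrite /wpsi (cfIndEsdprod _ _ wdefH).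
rewrite /wTop /= morphimEdom big_imset /=; last first.
  by move=> a b _ _; apply: (injmP (injm_sdpair2 wgact)); rewrite inE.
rewrite (eq_bigl predT); last by move=> t; rewrite inE.
apply: eq_bigr => t _.
rewrite -wsdpair_act // (cfIsomE wisoK) ?wshift_in // wTE ?wshift_in //.
exact: wshift_prod.
Qed.

Lemma wpsiEout phi x : x \notin wK -> wpsi phi x = 0.
Proof.
move=> xK; rewrite /wpsi (cfIndEsdprod _ _ wdefH) big1 // => w wT.
rewrite cfun0 // memJ_norm //.
by have [_ _ _ nKT _] := sdprod_context wdefH; apply: (subsetP nKT).
Qed.


Lemma wT_shift (phi : I -> 'CF(G)) t :
  (forall f, f \in wB -> wT phi (wshift f t) = wT phi f) ->
  wT (fun j => phi (j * t)%g) = wT phi.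
Proof.
move=> h; apply/cfunP => f; have [fB|fB] := boolP (f \in wB); last by rewrite !cfun0.
by rewrite -h // wTE // wTE ?wshift_in // wshift_prod.
Qed.

Lemma wpsi_irr (X : I -> 'CF(G)) : (forall i, X i \in irr G) -> injective X ->
  (forall i, X i 1%g = X 1%g 1%g) -> wpsi X \in irr wH.
Proof.
move=> Xirr Xinj X1.
have dnz : X 1%g 1%g != 0 by have /irrP[k ->] := Xirr 1%g; apply: irr1_neq0.
have thirr : cfIsom wisoK (wT X) \in irr wK by rewrite cfIsom_irr wT_irr.
have [s Ds] := irrP thirr.
have [nsKH _ mulKT nKT _] := sdprod_context (wdefH).
have defI : ('I_wH['chi_s] = wK)%g.
  apply/eqP; rewrite eqEsubset; apply/andP; split; last by rewrite sub_Inertia ?normal_sub.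
  apply/subsetP => x xI.
  have xH : x \in wH by rewrite inE.
  rewrite -mulKT in xH; case/mulsgP: xH xI => k w kK wT' -> xI.
  have kI : k \in ('I_wH['chi_s])%g by apply: (subsetP (sub_Inertia _ (normal_sub nsKH))).
  have := groupM (groupVr kI) xI; rewrite mulKg => wI.
  case/morphimP: wT' wI => t _ _ -> wI.
  have yN : sdpair2 wgact t \in 'N(wK)%g.
    by apply: (subsetP nKT); apply: mem_morphim; rewrite inE.
  have eqc : ('chi_s ^ sdpair2 wgact t)%CF = 'chi_s.
    by apply: inertiaJ; case/setIP: wI.
  have hsh f : f \in wB -> wT X (wshift f t^-1) = wT X f.
    move=> fB; have := congr1 (fun th : 'CF(wK) => th (sdpair1 wgact f)) eqc.
    rewrite /= cfConjgE // -(morphV _ (in_setT t)) /= -wsdpair_act //.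
    by rewrite -Ds !(cfIsomE wisoK) ?wshift_in.
  have := wT_inj dnz _ X1 (wT_shift hsh) 1%g.
  rewrite mul1g => /(_ (fun j => X1 _)) /Xinj /eqP.
  rewrite invg_eq1 => /eqP ->.
  by rewrite morph1 mulg1.
move/group_inj: defI => defI.
rewrite /wpsi Ds.
have [] := constt_Inertia_bijection s nsKH; rewrite defI cfInd_id => -> //.
by rewrite constt_irr !inE.
Qed.


Lemma irr_dot_neq0 (H : {group gT}) (a b : 'CF(G)) :
  a \in irr G -> b \in irr G -> '[a, b] != 0 -> a = b.
Proof.
move=> /irrP[i ->] /irrP[j ->]; rewrite cfdot_irr.
by have [->|] := eqVneq i j; rewrite ?eqxx.
Qed.

Lemma irr_dot_ge0 (K : {group fT}) (a b : 'CF(K)) :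
  a \in irr K -> b \in irr K -> 0 <= '[a, b].
Proof. by move=> /irrP[i ->] /irrP[j ->]; rewrite cfdot_irr ler0n. Qed.

Lemma irr_dot_neq0K (K : {group fT}) (a b : 'CF(K)) :
  a \in irr K -> b \in irr K -> '[a, b] != 0 -> a = b.
Proof.
move=> /irrP[i ->] /irrP[j ->]; rewrite cfdot_irr.
by have [->|] := eqVneq i j; rewrite ?eqxx.
Qed.

Lemma wpsi_aut (X : I -> 'CF(G)) (u : {rmorphism algC -> algC}) :
  (forall i, X i \in irr G) -> (forall i, X i 1%g = X 1%g 1%g) ->
  (forall f, f \in wB -> \sum_t \prod_j u (X (j * t)%g (f j)) = \sum_t \prod_j X (j * t)%g (f j)) ->
  exists t, cfAut u (X 1%g) = X t.
Proof.
move=> Xirr X1 hu.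
pose Th t := wT (fun j => X (j * t)%g).
pose Th' t := wT (fun j => cfAut u (X (j * t)%g)).
have Thirr t : Th t \in irr wB by apply: wT_irr.
have Th'irr t : Th' t \in irr wB by apply: wT_irr => j; rewrite cfAut_irr.
have eqS : \sum_t Th' t = \sum_t Th t.
  apply/cfunP => f; rewrite !sum_cfunE.
  have [fB|fB] := boolP (f \in wB); last by apply: eq_bigr => t _; rewrite !cfun0.
  rewrite (eq_bigr (fun t => \prod_j u (X (j * t)%g (f j)))); last first.
    by move=> t _; rewrite wTE //; apply: eq_bigr => j _; rewrite cfunE.
  by rewrite hu //; apply: eq_bigr => t _; rewrite wTE.
have nz : '[Th' 1%g, \sum_t Th' t] != 0.
  have n1 : '[Th' 1%g, Th' 1%g] = 1 by have /irrP[i ->] := Th'irr 1%g; apply: cfnorm_irr.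
  rewrite cfdot_sumr (bigD1 1%g) //= n1; apply: lt0r_neq0.
  by rewrite ltr_wpDr ?ltr01 // sumr_ge0 // => t _; apply: irr_dot_ge0.
rewrite eqS cfdot_sumr in nz.
have [t tnz] : exists t, '[Th' 1%g, Th t] != 0.
  apply/existsP; apply: contraR nz => /existsPn h.
  by apply/eqP; apply: big1 => t _; apply/eqP; have := h t; rewrite negbK.
have eqT := irr_dot_neq0K (Th'irr _) (Thirr _) tnz.
have dnz : X 1%g 1%g != 0 by have /irrP[k ->] := Xirr 1%g; apply: irr1_neq0.
have h1 k : cfAut u (X k) 1%g = X 1%g 1%g.
  by rewrite -(X1 k); have /irrP[i ->] := Xirr k; apply: cfAut_irr1.
have := wT_inj dnz (fun j => h1 _) (fun j => X1 _) eqT 1%g.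
by rewrite !mul1g => ->; exists t.
Qed.

End Wreath.


Lemma preimage_subfield (K : algC -> Prop) (L : fieldExtType rat)
  (f : {rmorphism L -> algC}) : subfieldC K ->
  exists Kp : {subfield L}, forall y, y \in Kp <-> K (f y).
Proof.
move=> hK; apply: pred_subfield.
- by rewrite rmorph0; apply: (sf0 hK).
- by move=> x y hx hy; rewrite rmorphD; apply: (sfD hK).
- by move=> a x hx; rewrite rmorphZ_num; apply: (sfM hK) => //; apply: (sfrat hK).
- by rewrite rmorph1; apply: (sf1 hK).
- by move=> x y hx hy; rewrite rmorphM; apply: (sfM hK).
Qed.

Section GalMain.
Variables (gT : finGroupType) (G : {group gT}) (chi : 'CF(G)) (Hchi : chi \in irr G)
  (F : algC -> Prop) (n : nat) (hF : subfieldC F) (hFE : forall x, F x -> Qchar chi x)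
  (hdeg : field_degreeC F (Qchar chi) n).
Variables (Qn : splittingFieldType rat) (galQn : galois 1 {:Qn}) (QnC : {rmorphism Qn -> algC})
  (ext : gal_of {:Qn} -> {rmorphism algC -> algC})
  (extE : forall nu a, ext nu (QnC a) = QnC (nu a))
  (N : nat) (w : Qn) (prw : N.-primitive_root w) (genw : <<1; w>>%VS = fullv)
  (aval : gT -> Qn) (avalE : forall g, QnC (aval g) = chi g)
  (Ep Fp : {subfield Qn}) (hEp : forall x, x \in Ep <-> Qchar chi (QnC x))
  (hFp : forall x, x \in Fp <-> F (QnC x)).

Lemma imQn y : Qchar chi y -> exists x, y = QnC x.
Proof.
move=> hy; apply: (@gen_min _ (fun y => exists x, y = QnC x) _ _ _ hy).
  2: by move=> _ [g ->]; exists (aval g); rewrite avalE.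
split.
- by exists 1; rewrite rmorph1.
- by move=> _ _ [a ->] [b ->]; exists (a - b); rewrite rmorphB.
- by move=> _ _ [a ->] [b ->]; exists (a / b); rewrite fmorph_div.
Qed.

Lemma aval_E g : aval g \in Ep.
Proof. by apply/hEp; rewrite avalE; apply: gen_S; exists g. Qed.

Lemma FpEp : (Fp <= Ep)%VS.
Proof. by apply/subvP => x /hFp /hFE /hEp. Qed.

Lemma agreeE (f1 f2 : 'AEnd(Qn)) :
  (forall g, f1 (aval g) = f2 (aval g)) -> {in Ep, f1 =1 f2}.
Proof.
move=> h x /hEp xE.
pose P y := exists x, y = QnC x /\ f1 x = f2 x.
have : P (QnC x).
  apply: (@gen_min _ P _ _ _ xE).
    2: by move=> _ [g ->]; exists (aval g); rewrite avalE; split.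
  split.
  - by exists 1; split; rewrite !rmorph1.
  - move=> _ _ [a [-> ha]] [b [-> hb]]; exists (a - b); split; first by rewrite rmorphB.
    by rewrite !raddfB; congr (_ - _); [exact: ha | exact: hb].
  - move=> _ _ [a [-> ha]] [b [-> hb]]; exists (a / b); split; first by rewrite fmorph_div.
    by rewrite !fmorph_div; congr (_ / _); [exact: ha | exact: hb].
by case=> y [/fmorph_inj <-].
Qed.

Lemma AEnd_w (f g : 'AEnd(Qn)) : f w = g w -> forall a, f a = g a.
Proof.
move=> fg a; have : a \in <<1; w>>%VS by rewrite genw memvf.
case/Fadjoin_polyP => p /polyOverP p1 ->.
rewrite !horner_coef !rmorph_sum; apply: eq_bigr => i _.
rewrite !rmorphM !rmorphXn.
congr (_ * _ ^+ _); last exact: fg.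
have /vlineP[k ->] : p`_i \in <[1]>%VS by rewrite -[<[1]>%VS]/(1%VS) p1.
have h (h0 : 'AEnd(Qn)) c : h0 (c *: 1) = c *: 1 by rewrite linearZ /= rmorph1.
exact: (etrans (h f k) (esym (h g k))).
Qed.

Lemma galQn_abelian : abelian 'Gal({:Qn} / 1).
Proof.
apply/centsP => x _ y _; apply/eqP/gal_eqP => a _.
apply: AEnd_w.
have pw (z : gal_of {:Qn}) : exists i : nat, z w = w ^+ i.
  have : (z w) ^+ N = 1 by rewrite -rmorphXn prim_expr_order // rmorph1.
  by case/(prim_rootP prw) => i ->; exists i.
rewrite !galM ?memvf //.
have [i hi] := pw x; have [j hj] := pw y.
rewrite hi hj !rmorphXn.
change ((y w) ^+ i = (x w) ^+ j).
by rewrite hi hj -!exprM mulnC.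
Qed.


Lemma galFull_Fp : galois Fp {:Qn}.
Proof. by apply: (galoisS _ galQn); rewrite sub1v subvf. Qed.

Lemma galEp : galois 1 Ep.
Proof.
have gE : galois Ep {:Qn} by apply: (galoisS _ galQn); rewrite sub1v subvf.
have fixE := galois_fixedField gE.
have nsG : ('Gal({:Qn} / Ep) <| 'Gal({:Qn} / 1))%g.
  by rewrite -sub_abelian_normal ?galQn_abelian // galS ?sub1v.
have := normal_fixedField_galois galQn nsG.
by rewrite fixE.
Qed.

Lemma galFE : galois Fp Ep.
Proof. by apply: (galoisS _ galEp); rewrite sub1v FpEp. Qed.

Lemma cardGal : #|('Gal(Ep / Fp))%g| = n.
Proof.
rewrite -galois_dim ?galFE //.
by rewrite (dim_ext hEp hFp hF imQn hFE hdeg) mulnK ?adim_gt0.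
Qed.


Lemma sFEfull : (Fp <= Ep <= {:Qn})%VS.
Proof. by rewrite FpEp subvf. Qed.

Lemma nFE : normalField Fp Ep.
Proof. by case/and3P: galFE. Qed.

Definition GalEF := ('Gal(Ep / Fp))%G.
Local Notation I := (subg_of GalEF).

Definition lift (s : gal_of Ep) : gal_of {:Qn} :=
  odflt 1%g [pick nu in ('Gal({:Qn} / Fp))%g | gal Ep nu == s].

Lemma lift_spec s : s \in GalEF -> {in Ep, lift s =1 s}.
Proof.
move=> sG; rewrite /lift; case: pickP => [nu /andP[nuG /eqP <-]|none] /=.
  by move=> a aE; rewrite (normalField_cast_eq sFEfull nFE nuG aE).
move: sG; rewrite /GalEF /= -(normalField_img galFull_Fp sFEfull nFE).
case/morphimP => nu _ nuG Ds.
by have := none nu; rewrite nuG Ds eqxx.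
Qed.

Definition X (t : I) : 'CF(G) := cfAut (ext (lift (sgval t))) chi.

Lemma XE t g : X t g = QnC (sgval t (aval g)).
Proof.
rewrite cfunE -avalE extE lift_spec ?aval_E //.
exact: subgP.
Qed.

Lemma X_irr t : X t \in irr G.
Proof. by rewrite cfAut_irr. Qed.

Lemma X1 t : X t 1%g = X 1%g 1%g.
Proof.
have [i Di] := irrP Hchi.
by rewrite /X Di !cfAut_irr1.
Qed.

Lemma X_inj : injective X.
Proof.
move=> t t' eqX; apply: subg_inj; apply/eqP/gal_eqP.
apply: agreeE => g; apply: (fmorph_inj QnC).
by rewrite -!XE eqX.
Qed.


Lemma cardI : #|I| = n.
Proof.
rewrite card_sub -cardGal; apply: eq_card => x; rewrite !inE.
by [].
Qed.

Lemma Xval1 t : X t 1%g = chi 1%g.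
Proof. by have [i Di] := irrP Hchi; rewrite /X Di cfAut_irr1. Qed.

Lemma psi1 : wpsi X 1%g = n%:R * chi 1%g ^+ n.
Proof.
rewrite -(morph1 (sdpair1_morphism (wgact G I))) /= wpsiE ?group1 //.
rewrite (eq_bigr (fun _ => chi 1%g ^+ #|I|)); last first.
  by move=> t _; rewrite -prodr_const; apply: eq_bigr => j _; rewrite oneg_ffun Xval1.
by rewrite sumr_const cardI mulr_natl.
Qed.


Lemma cast_gal nu : nu \in ('Gal({:Qn} / Fp))%g -> gal Ep nu \in GalEF.
Proof.
move=> nuG; rewrite /GalEF /= -(normalField_img galFull_Fp sFEfull nFE).
exact: mem_morphim.
Qed.

Lemma nu_act nu (s : gal_of Ep) b : nu \in ('Gal({:Qn} / Fp))%g -> b \in Ep ->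
  nu (s b) = (s * gal Ep nu)%g b.
Proof.
move=> nuG bE; rewrite galM //.
by rewrite (normalField_cast_eq sFEfull nFE nuG) // memv_gal.
Qed.

Lemma psi_in_F h : F (wpsi X h).
Proof.
have [hK|hK] := boolP (h \in wK G I); last by rewrite wpsiEout //; apply: (sf0 hF).
case/morphimP: hK => f _ fB ->; rewrite wpsiE //.
pose A := \sum_(t : I) \prod_j sgval (j * t)%g (aval (f j)).
have -> : \sum_(t : I) \prod_j X (j * t)%g (f j) = QnC A.
  rewrite rmorph_sum; apply: eq_bigr => t _; rewrite rmorph_prod.
  by apply: eq_bigr => j _; rewrite XE.
apply/hFp; rewrite -(galois_fixedField galFull_Fp).
apply/fixedFieldP; first exact: memvf.
move=> nu nuG.
pose r : I := subg GalEF (gal Ep nu).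
have Dr : sgval r = gal Ep nu by rewrite subgK ?cast_gal.
have step : nu A = \sum_(t : I) \prod_j sgval (j * (t * r))%g (aval (f j)).
  rewrite rmorph_sum; apply: eq_bigr => t _; rewrite rmorph_prod.
  apply: eq_bigr => j _; rewrite mulgA.
  change (nu (sgval (j * t)%g (aval (f j))) = (sgval (j * t)%g * sgval r)%g (aval (f j))).
  by rewrite Dr nu_act ?aval_E.
rewrite step /A; symmetry; exact: (reindex_inj (mulIg r)).
Qed.


Lemma F_in_psi x : F x -> Qchar (wpsi X) x.
Proof.
move=> Fx; have [a Da] := imQn (hFE Fx).
have aF : a \in Fp by apply/hFp; rewrite -Da.
have [Lp hLp] := preimage_subfield QnC (gen_sub (fun y => exists h, y = wpsi X h)).
rewrite Da; apply/hLp.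
have galL : galois Lp {:Qn} by apply: (galoisS _ galQn); rewrite sub1v subvf.
rewrite -(galois_fixedField galL); apply/fixedFieldP; first exact: memvf.
move=> nu nuG.
have fixpsi h : ext nu (wpsi X h) = wpsi X h.
  have [b Db] := imQn (hFE (psi_in_F h)).
  have bL : b \in Lp by apply/hLp; rewrite -Db; apply: gen_S; exists h.
  by rewrite Db extE (fixed_gal (subvf Lp) nuG bL).
have [t Dt] : exists t, cfAut (ext nu) (X 1%g) = X t.
  apply: wpsi_aut; [exact: X_irr | exact: X1 | move=> f fB].
  rewrite -(wpsiE X fB) -[RHS]fixpsi (wpsiE X fB) rmorph_sum.
  by apply: eq_bigr => s _; rewrite rmorph_prod.
have ag : {in Ep, gal_repr nu =1 sgval t}.
  apply: agreeE => g; apply: (fmorph_inj QnC).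
  have := congr1 (fun phi : 'CF(G) => phi g) Dt.
  by rewrite /= cfunE !XE -extE => <-; rewrite gal_id.
rewrite ag ?(subvP FpEp) //.
exact: (fixed_gal FpEp (subgP t) aF).
Qed.


Lemma main_sec : exists (hT : finGroupType) (H : {group hT}) (psi : 'CF(H)),
    [/\ psi \in irr H,
        (forall x, Qchar psi x <-> F x) &
        psi 1%g = n%:R * chi 1%g ^+ n].
Proof.
exists _, (wH G I), (wpsi X); split.
- by apply: wpsi_irr; [exact: X_irr | exact: X_inj | exact: X1].
- move=> x; split; last exact: F_in_psi.
  by apply: gen_min hF _ => _ [h ->]; exact: psi_in_F.
- exact: psi1.
Qed.

End GalMain.

Unset Implicit Arguments.
Theorem theorem2p5 (gT : finGroupType) (G : {group gT}) (chi : 'CF(G))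
  (Hchi : chi \in irr G) (F : algC -> Prop) (n : nat) :
  subfieldC F -> (forall x, F x -> Qchar chi x) ->
  field_degreeC F (Qchar chi) n ->
  exists (hT : finGroupType) (H : {group hT}) (psi : 'CF(H)),
    [/\ psi \in irr H,
        (forall x, Qchar psi x <-> F x) &
        psi 1%g = n%:R * chi 1%g ^+ n].
Proof.
move=> hF hFE hdeg.
have [Qn galQn [QnC gQnC [w [prw genw] QnG]]] := group_num_field_exists G.
have extE nu a : sval (gQnC nu) (QnC a) = QnC (nu a).
  by rewrite (svalP (gQnC nu)).
have /fin_all_exists[aval avalE] : forall g : gT, exists a, QnC a = chi g.
  move=> g; have [gG|gG] := boolP (g \in G); last by exists 0; rewrite rmorph0 cfun0.
  have [a Da] := QnG _ G chi (irrWchar Hchi) g (order_dvdG gG).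
  by exists a.
have [Ep hEp] := preimage_subfield QnC (gen_sub (fun y => exists g, y = chi g)).
have [Fp hFp] := preimage_subfield QnC hF.
exact: (main_sec Hchi hF hFE hdeg galQn extE prw genw avalE hEp hFp).
Qed.
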